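(* Fix $\lambda>0$ and let $M_\lambda$ be as in the context. Then for all $x\ge3$, \[ \inf_{x-1\le t\le x}M'_\lambda(t)\le\inf_{x\le t\le x+1}M'_\lambda(t)\le \sup_{x\le t\le x+1}M'_\lambda(t)\le \sup_{x-1\le t\le x}M'_\lambda(t). \]
   Context: For $\lambda>0$, $M_\lambda:[0,\infty)\to\mathbb R$ is defined by $M_\lambda(x)=0$ for $0\le x\le1$ and, for all $x>0$, $M_{\lambda}(x+1)=\int_0^x\frac{\lambda e^{-\lambda t}}{1-e^{-\lambda x}}\bigl(M_{\lambda}(t)+M_{\lambda}(x-t)\bigr)\,dt+1$. $M_\lambda(x)$ is the expected number of unit intervals at saturation in the parking process on $(0,x)$ with truncated exponential left-endpoint density. $M_\lambda$ is differentiable on $(2,\infty)$, which is the range where the derivatives in the claim are evaluated. *)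

(* Defs.v *)
From Stdlib Require Import Reals.
From Coquelicot Require Import Coquelicot.
Open Scope R_scope.

Definition is_M_lambda (lam : R) (M : R -> R) : Prop :=
  (forall x, 0 <= x <= 1 -> M x = 0) /\
  (forall x, 0 < x ->
     M (x + 1) =
       RInt (fun t => lam * exp (- (lam * t)) / (1 - exp (- (lam * x)))
                        * (M t + M (x - t))) 0 x + 1).

Definition deriv_values (M : R -> R) (a b : R) : R -> Prop :=
  fun d => exists t, a <= t <= b /\ is_derive M t d.

(* Main.v *)
Require Import Defs.
From Stdlib Require Import Reals Lra.
From Coquelicot Require Import Coquelicot.
Open Scope R_scope.

Definition Nf (lam : R) (M : R -> R) (z : R) :=
  RInt (fun t => lam * exp (- (lam * t)) * M t) 0 z.
Definition Pf (lam : R) (M : R -> R) (z : R) :=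
  RInt (fun t => lam * exp (lam * t) * M t) 0 z.
Definition Ff (lam : R) (M : R -> R) (z : R) :=
  1 + (Nf lam M z + exp (- (lam * z)) * Pf lam M z) / (1 - exp (- (lam * z))).
Definition Kf (lam : R) (M : R -> R) (x : R) :=
  M x * (exp (lam * x) - exp (- (lam * x))) - Pf lam M x - Nf lam M x.
Definition phi (lam x : R) := exp (lam * x) - 2 + exp (- (lam * x)).

Ltac req := match goal with |- ?a = ?b => change (@eq R a b) end.

Lemma exp_neg_lt1 (lam z : R) : 0 < lam -> 0 < z -> exp (- (lam * z)) < 1.
Proof.
  intros hl hz. rewrite <- exp_0. apply exp_increasing.
  assert (0 < lam * z) by (apply Rmult_lt_0_compat; lra). lra.
Qed.

Lemma one_minus_nz (lam z : R) : 0 < lam -> 0 < z -> 1 - exp (- (lam * z)) <> 0.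
Proof. intros hl hz. pose proof (exp_neg_lt1 lam z hl hz). lra. Qed.

Lemma M_12 (lam : R) (M : R -> R) (hM : is_M_lambda lam M) (y : R) :
  1 < y <= 2 -> M y = 1.
Proof.
  intros hy. destruct hM as [h0 h1].
  replace y with ((y - 1) + 1) by ring.
  rewrite (h1 (y - 1)) by lra.
  rewrite (RInt_ext _ (fun _ => 0)).
  - rewrite RInt_const. unfold scal; simpl; unfold mult; simpl. ring.
  - intros t ht. rewrite Rmin_left in ht by lra. rewrite Rmax_right in ht by lra.
    rewrite (h0 t) by lra. rewrite (h0 (y - 1 - t)) by lra. req; ring.
Qed.

Lemma int_gM (lam : R) (M : R -> R) (hM : is_M_lambda lam M) (g : R -> R)
  (hg : forall t, continuous g t) (n : R)
  (hn : forall y, 1 < y < n -> continuous M y) (z : R) :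
  0 <= z < n -> ex_RInt (fun t => g t * M t) 0 z.
Proof.
  intros hz. destruct hM as [h0 h1].
  assert (I01 : forall w, 0 <= w <= 1 -> ex_RInt (fun t => g t * M t) 0 w).
  { intros w hw. apply (ex_RInt_ext (fun _ => 0)).
    - intros t ht. rewrite Rmin_left in ht by lra. rewrite Rmax_right in ht by lra.
      rewrite (h0 t) by lra. req; ring.
    - apply ex_RInt_const. }
  assert (I12 : forall w, 1 <= w <= 2 -> ex_RInt (fun t => g t * M t) 1 w).
  { intros w hw. apply (ex_RInt_ext g).
    - intros t ht. rewrite Rmin_left in ht by lra. rewrite Rmax_right in ht by lra.
      rewrite (M_12 lam M (conj h0 h1) t) by lra. req; ring.
    - apply (@ex_RInt_continuous R_CompleteNormedModule). intros; apply hg. }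
  destruct (Rle_dec z 1) as [Hz1|Hz1]. { apply I01; lra. }
  apply (ex_RInt_Chasles _ 0 1 z). { apply I01; lra. }
  destruct (Rle_dec z 2) as [Hz2|Hz2]. { apply I12; lra. }
  apply (ex_RInt_Chasles _ 1 2 z). { apply I12; lra. }
  apply (@ex_RInt_continuous R_CompleteNormedModule). intros w hw.
  rewrite Rmin_left in hw by lra. rewrite Rmax_right in hw by lra.
  apply (continuous_mult g M). apply hg. apply hn. lra.
Qed.
Lemma exR_scal (c : R) (f : R -> R) a b : ex_RInt f a b -> ex_RInt (fun t => c * f t) a b.
Proof. intros H. exact (@ex_RInt_scal R_NormedModule f a b c H). Qed.
Lemma RR_scal (c : R) (f : R -> R) a b : ex_RInt f a b -> RInt (fun t => c * f t) a b = c * RInt f a b.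
Proof. intros H. exact (@RInt_scal R_CompleteNormedModule f a b c H). Qed.
Lemma exR_plus (f g : R -> R) a b : ex_RInt f a b -> ex_RInt g a b -> ex_RInt (fun t => f t + g t) a b.
Proof. intros H1 H2. exact (@ex_RInt_plus R_NormedModule f g a b H1 H2). Qed.
Lemma RR_plus (f g : R -> R) a b : ex_RInt f a b -> ex_RInt g a b ->
  RInt (fun t => f t + g t) a b = RInt f a b + RInt g a b.
Proof. intros H1 H2. exact (@RInt_plus R_CompleteNormedModule f g a b H1 H2). Qed.
Lemma exR_swap (f : R -> R) a b : ex_RInt f a b -> ex_RInt f b a.
Proof. intros H. exact (@ex_RInt_swap R_NormedModule f a b H). Qed.
Lemma RR_swap (f : R -> R) a b : ex_RInt f a b -> RInt f b a = - RInt f a b.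
Proof. intros H. symmetry. exact (@opp_RInt_swap R_CompleteNormedModule f a b H). Qed.
Lemma exR_ext (f g : R -> R) a b : (forall t, Rmin a b < t < Rmax a b -> f t = g t) ->
  ex_RInt f a b -> ex_RInt g a b.
Proof. intros H1 H2. exact (@ex_RInt_ext R_NormedModule f g a b H1 H2). Qed.
Lemma RR_ext (f g : R -> R) a b : (forall t, Rmin a b < t < Rmax a b -> f t = g t) ->
  RInt f a b = RInt g a b.
Proof. intros H1. exact (@RInt_ext R_CompleteNormedModule f g a b H1). Qed.

Lemma exR_refl (f : R -> R) (x : R) : ex_RInt f 0 x -> ex_RInt (fun t => f (x - t)) 0 x.
Proof.
  intros H.
  assert (H' : ex_RInt f (-1 * 0 + x) (-1 * x + x)).
  { replace (-1 * 0 + x) with x by ring. replace (-1 * x + x) with 0 by ring.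
    apply exR_swap; exact H. }
  pose proof (@ex_RInt_comp_lin R_NormedModule f (-1) x 0 x H') as H2.
  apply (exR_ext (fun t => -1 * (-1 * f (-1 * t + x)))).
  - intros t _. replace (-1 * t + x) with (x - t) by ring. ring.
  - apply exR_scal. exact H2.
Qed.

Lemma RR_refl (f : R -> R) (x : R) : ex_RInt f 0 x -> RInt (fun t => f (x - t)) 0 x = RInt f 0 x.
Proof.
  intros H.
  assert (H' : ex_RInt f (-1 * 0 + x) (-1 * x + x)).
  { replace (-1 * 0 + x) with x by ring. replace (-1 * x + x) with 0 by ring.
    apply exR_swap; exact H. }
  pose proof (@RInt_comp_lin R_CompleteNormedModule f (-1) x 0 x H') as H2.
  pose proof (@ex_RInt_comp_lin R_NormedModule f (-1) x 0 x H') as H3.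
  change (RInt (fun y => -1 * f (-1 * y + x)) 0 x = RInt f (-1 * 0 + x) (-1 * x + x)) in H2.
  change (ex_RInt (fun y => -1 * f (-1 * y + x)) 0 x) in H3.
  rewrite (RR_ext _ (fun t => -1 * (-1 * f (-1 * t + x)))).
  2: { intros t _. replace (-1 * t + x) with (x - t) by ring. ring. }
  rewrite RR_scal by exact H3. rewrite H2.
  replace (-1 * 0 + x) with x by ring. replace (-1 * x + x) with 0 by ring.
  rewrite RR_swap by exact H. req; ring.
Qed.

Lemma formula (lam : R) (M : R -> R) (hl : 0 < lam) (hM : is_M_lambda lam M) (x : R) :
  0 < x ->
  ex_RInt (fun t => lam * exp (- (lam * t)) * M t) 0 x ->
  ex_RInt (fun t => lam * exp (lam * t) * M t) 0 x ->
  M (x + 1) = Ff lam M x.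
Proof.
  intros hx IN IP. destruct hM as [h0 h1]. rewrite (h1 x hx). unfold Ff, Nf, Pf.
  set (E := exp (- (lam * x))).
  set (g1 := fun t => lam * exp (- (lam * t)) * M t).
  set (h := fun s => E * (lam * exp (lam * s) * M s)).
  assert (Eg2 : forall t, h (x - t) = lam * exp (- (lam * t)) * M (x - t)).
  { intros t. unfold h, E.
    replace (exp (- (lam * t))) with (exp (- (lam * x)) * exp (lam * (x - t))).
    ring. rewrite <- exp_plus. f_equal. ring. }
  assert (Ih : ex_RInt h 0 x) by (apply exR_scal; exact IP).
  assert (Ig2 : ex_RInt (fun t => h (x - t)) 0 x) by (apply exR_refl; exact Ih).
  assert (hE : 1 - E <> 0) by (apply one_minus_nz; lra).
  rewrite (RR_ext _ (fun t => / (1 - E) * (g1 t + h (x - t)))).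
  2: { intros t _. rewrite Eg2. unfold g1. fold E. field. exact hE. }
  rewrite RR_scal by (apply exR_plus; [exact IN | exact Ig2]).
  rewrite RR_plus by (first [exact IN | exact Ig2]).
  rewrite RR_refl by exact Ih. unfold h. rewrite RR_scal by exact IP.
  fold g1. field. exact hE.
Qed.
Lemma cont_gm (lam : R) x : continuous (fun t => lam * exp (- (lam * t))) x.
Proof. apply (@ex_derive_continuous R_AbsRing R_NormedModule). auto_derive. auto. Qed.
Lemma cont_gp (lam : R) x : continuous (fun t => lam * exp (lam * t)) x.
Proof. apply (@ex_derive_continuous R_AbsRing R_NormedModule). auto_derive. auto. Qed.
Lemma cont_E (lam : R) x : continuous (fun t => exp (- (lam * t))) x.
Proof. apply (@ex_derive_continuous R_AbsRing R_NormedModule). auto_derive. auto. Qed.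

Definition Good (M : R -> R) (n : R) := forall y, 1 < y < n -> continuous M y.

Lemma int_N (lam : R) (M : R -> R) (hM : is_M_lambda lam M) n (hn : Good M n) z :
  0 <= z < n -> ex_RInt (fun t => lam * exp (- (lam * t)) * M t) 0 z.
Proof. intros; apply (int_gM lam M hM (fun t => lam * exp (- (lam * t)))) with n; auto. apply cont_gm. Qed.
Lemma int_P (lam : R) (M : R -> R) (hM : is_M_lambda lam M) n (hn : Good M n) z :
  0 <= z < n -> ex_RInt (fun t => lam * exp (lam * t) * M t) 0 z.
Proof. intros; apply (int_gM lam M hM (fun t => lam * exp (lam * t))) with n; auto. apply cont_gp. Qed.

Lemma loc_int (a b x : R) : a < x < b -> locally x (fun z => a < z < b).
Proof. intros h. apply (locally_interval _ x a b); simpl; try lra. intros y h1 h2; simpl in *; lra. Qed.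

Lemma cont_Nf (lam : R) (M : R -> R) (hM : is_M_lambda lam M) n (hn : Good M n) x :
  0 < x < n -> continuous (Nf lam M) x.
Proof.
  intros hx. apply (@continuous_RInt_1 R_NormedModule (fun t => lam * exp (- (lam * t)) * M t) 0 x).
  generalize (loc_int 0 n x hx). apply filter_imp. intros z hz.
  apply (@RInt_correct R_CompleteNormedModule). apply (int_N lam M hM n hn). lra.
Qed.
Lemma cont_Pf (lam : R) (M : R -> R) (hM : is_M_lambda lam M) n (hn : Good M n) x :
  0 < x < n -> continuous (Pf lam M) x.
Proof.
  intros hx. apply (@continuous_RInt_1 R_NormedModule (fun t => lam * exp (lam * t) * M t) 0 x).
  generalize (loc_int 0 n x hx). apply filter_imp. intros z hz.
  apply (@RInt_correct R_CompleteNormedModule). apply (int_P lam M hM n hn). lra.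
Qed.

Lemma cont_step (lam : R) (M : R -> R) (hl : 0 < lam) (hM : is_M_lambda lam M) n (hn : Good M n) x :
  0 < x < n -> continuous (fun z => M (z + 1)) x.
Proof.
  intros hx.
  apply (continuous_ext_loc _ (Ff lam M)).
  { generalize (loc_int 0 n x hx). apply filter_imp. intros z hz.
    symmetry. apply formula; auto; try lra.
    apply (int_N lam M hM n hn); lra. apply (int_P lam M hM n hn); lra. }
  unfold Ff.
  apply (continuous_ext (fun z => plus 1 (mult (plus (Nf lam M z) (mult (exp (- (lam * z))) (Pf lam M z)))
     (/ (minus 1 (exp (- (lam * z)))))))).
  { intros z. reflexivity. }
  apply (@continuous_plus R_UniformSpace R_AbsRing R_NormedModule).
  apply continuous_const.
  apply (@continuous_mult R_UniformSpace R_AbsRing).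
  apply (@continuous_plus R_UniformSpace R_AbsRing R_NormedModule).
  apply (cont_Nf lam M hM n hn x hx).
  apply (@continuous_mult R_UniformSpace R_AbsRing). apply cont_E. apply (cont_Pf lam M hM n hn x hx).
  apply (continuous_Rinv_comp (fun z => minus 1 (exp (- (lam * z))))).
  apply (@continuous_minus R_UniformSpace R_AbsRing R_NormedModule).
  apply continuous_const. apply cont_E.
  apply one_minus_nz; lra.
Qed.

Lemma good_all (lam : R) (M : R -> R) (hl : 0 < lam) (hM : is_M_lambda lam M) :
  forall k : nat, Good M (INR k).
Proof.
  induction k as [|k IH].
  - intros y hy. simpl in hy. lra.
  - intros y hy. rewrite S_INR in hy.
    apply (continuous_ext (fun z => M ((z - 1) + 1))).
    { intros z. f_equal. ring. }
    apply (continuous_comp (fun z => z - 1) (fun z => M (z + 1))).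
    + apply (@continuous_minus R_UniformSpace R_AbsRing R_NormedModule).
      apply continuous_id. apply continuous_const.
    + apply (cont_step lam M hl hM (INR k) IH). lra.
Qed.

Lemma M_cont (lam : R) (M : R -> R) (hl : 0 < lam) (hM : is_M_lambda lam M) y :
  1 < y -> continuous M y.
Proof.
  intros hy. destruct (INR_unbounded y) as [k hk].
  apply (good_all lam M hl hM k). lra.
Qed.

Lemma good_any (lam : R) (M : R -> R) (hl : 0 < lam) (hM : is_M_lambda lam M) n : Good M n.
Proof. intros y hy. apply (M_cont lam M hl hM). lra. Qed.
Lemma der_Nf (lam : R) (M : R -> R) (hl : 0 < lam) (hM : is_M_lambda lam M) x :
  1 < x -> is_derive (Nf lam M) x (lam * exp (- (lam * x)) * M x).
Proof.
  intros hx.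
  apply (@is_derive_RInt R_NormedModule (fun t => lam * exp (- (lam * t)) * M t) (Nf lam M) 0 x).
  - generalize (loc_int 0 (x + 1) x ltac:(lra)). apply filter_imp. intros z hz.
    apply (@RInt_correct R_CompleteNormedModule).
    apply (int_N lam M hM (x + 1) (good_any lam M hl hM _)). lra.
  - apply (@continuous_mult R_UniformSpace R_AbsRing). apply cont_gm.
    apply (M_cont lam M hl hM). lra.
Qed.
Lemma der_Pf (lam : R) (M : R -> R) (hl : 0 < lam) (hM : is_M_lambda lam M) x :
  1 < x -> is_derive (Pf lam M) x (lam * exp (lam * x) * M x).
Proof.
  intros hx.
  apply (@is_derive_RInt R_NormedModule (fun t => lam * exp (lam * t) * M t) (Pf lam M) 0 x).
  - generalize (loc_int 0 (x + 1) x ltac:(lra)). apply filter_imp. intros z hz.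
    apply (@RInt_correct R_CompleteNormedModule).
    apply (int_P lam M hM (x + 1) (good_any lam M hl hM _)). lra.
  - apply (@continuous_mult R_UniformSpace R_AbsRing). apply cont_gp.
    apply (M_cont lam M hl hM). lra.
Qed.

Lemma exp_pos_inv (lam x : R) : exp (lam * x) = / exp (- (lam * x)).
Proof. rewrite <- exp_Ropp. f_equal. ring. Qed.

Lemma der_M (lam : R) (M : R -> R) (hl : 0 < lam) (hM : is_M_lambda lam M) x :
  1 < x -> is_derive M (x + 1) (lam * Kf lam M x / phi lam x).
Proof.
  intros hx.
  pose proof (der_Nf lam M hl hM x hx) as DN.
  pose proof (der_Pf lam M hl hM x hx) as DP.
  assert (DF : is_derive (Ff lam M) x (lam * Kf lam M x / phi lam x)).
  { unfold Ff. auto_derive.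
    - repeat split; [exists (lam * exp (- (lam * x)) * M x); exact DN
      | exists (lam * exp (lam * x) * M x); exact DP
      | apply one_minus_nz; lra].
    - replace (Derive (fun x0 => Nf lam M x0) x) with (lam * exp (- (lam * x)) * M x)
        by (symmetry; apply is_derive_unique; exact DN).
      replace (Derive (fun x0 => Pf lam M x0) x) with (lam * exp (lam * x) * M x)
        by (symmetry; apply is_derive_unique; exact DP).
      unfold Kf, phi. rewrite exp_pos_inv.
      assert (hE0 : exp (- (lam * x)) <> 0) by (apply Rgt_not_eq; apply exp_pos).
      assert (hE1 : 1 - exp (- (lam * x)) <> 0) by (apply one_minus_nz; lra).
      set (E := exp (- (lam * x))) in *.
      assert (hphi : / E - 2 + E <> 0).
      { replace (/ E - 2 + E) with ((1 - E) * (1 - E) / E) by (field; exact hE0).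
        unfold Rdiv. apply Rmult_integral_contrapositive_currified.
        apply Rmult_integral_contrapositive_currified; exact hE1.
        apply Rinv_neq_0_compat; exact hE0. }
      assert (h2 : 1 - 2 * E + E * E <> 0).
      { replace (1 - 2 * E + E * E) with ((1 - E) * (1 - E)) by ring.
        apply Rmult_integral_contrapositive_currified; exact hE1. }
      assert (h3 : 1 + - E <> 0) by (replace (1 + - E) with (1 - E) by ring; exact hE1).
      field; repeat split; assumption. }
  assert (DG : is_derive (fun z => M (z + 1)) x (lam * Kf lam M x / phi lam x)).
  { apply (is_derive_ext_loc (Ff lam M)).
    - generalize (loc_int 0 (x + 1) x ltac:(lra)). apply filter_imp. intros z hz.
      symmetry. apply formula; auto; try lra.
      apply (int_N lam M hM (x + 1) (good_any lam M hl hM _)); lra.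
      apply (int_P lam M hM (x + 1) (good_any lam M hl hM _)); lra.
    - exact DF. }
  assert (DS : is_derive (fun y : R => y - 1) (x + 1) 1).
  { auto_derive; auto; ring. }
  assert (DG' : is_derive (fun z => M (z + 1)) (x + 1 - 1) (lam * Kf lam M x / phi lam x)).
  { replace (x + 1 - 1) with x by ring. exact DG. }
  pose proof (is_derive_comp (fun z => M (z + 1)) (fun y => y - 1) (x + 1) _ _ DG' DS) as H.
  apply (is_derive_ext (fun y => M (y - 1 + 1))).
  { intros t. f_equal. ring. }
  replace (lam * Kf lam M x / phi lam x) with (scal 1 (lam * Kf lam M x / phi lam x)).
  exact H. apply (@scal_one R_AbsRing R_NormedModule).
Qed.
Lemma der_K (lam : R) (M : R -> R) (hl : 0 < lam) (hM : is_M_lambda lam M) x d :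
  1 < x -> is_derive M x d ->
  is_derive (Kf lam M) x (d * (exp (lam * x) - exp (- (lam * x)))).
Proof.
  intros hx hd.
  pose proof (der_Nf lam M hl hM x hx) as DN.
  pose proof (der_Pf lam M hl hM x hx) as DP.
  unfold Kf. auto_derive.
  - repeat split; [exists d; exact hd
      | exists (lam * exp (lam * x) * M x); exact DP
      | exists (lam * exp (- (lam * x)) * M x); exact DN].
  - replace (Derive (fun x0 => Nf lam M x0) x) with (lam * exp (- (lam * x)) * M x)
      by (symmetry; apply is_derive_unique; exact DN).
    replace (Derive (fun x0 => Pf lam M x0) x) with (lam * exp (lam * x) * M x)
      by (symmetry; apply is_derive_unique; exact DP).
    replace (Derive (fun x0 => M x0) x) with d
      by (symmetry; apply is_derive_unique; exact hd).
    ring.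
Qed.

Lemma der_phi (lam x : R) : is_derive (phi lam) x (lam * (exp (lam * x) - exp (- (lam * x)))).
Proof. unfold phi. auto_derive; auto. ring. Qed.

Lemma phi_pos (lam z : R) : 0 < lam -> 0 < z -> 0 < phi lam z.
Proof.
  intros hl hz. unfold phi. rewrite exp_pos_inv.
  pose proof (exp_neg_lt1 lam z hl hz). pose proof (exp_pos (- (lam * z))).
  set (E := exp (- (lam * z))) in *.
  replace (/ E - 2 + E) with ((1 - E) * (1 - E) * / E) by (field; lra).
  apply Rmult_lt_0_compat. nra. apply Rinv_0_lt_compat; lra.
Qed.

Lemma cont_K (lam : R) (M : R -> R) (hl : 0 < lam) (hM : is_M_lambda lam M) x :
  1 < x -> continuous (Kf lam M) x.
Proof.
  intros hx. unfold Kf.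
  apply (continuous_ext (fun z => minus (minus (mult (M z) (minus (exp (lam * z)) (exp (- (lam * z))))) (Pf lam M z)) (Nf lam M z))).
  { intros z. reflexivity. }
  apply (@continuous_minus R_UniformSpace R_AbsRing R_NormedModule).
  apply (@continuous_minus R_UniformSpace R_AbsRing R_NormedModule).
  apply (@continuous_mult R_UniformSpace R_AbsRing).
  apply (M_cont lam M hl hM); lra.
  apply (continuous_ext (fun z => exp (lam * z) - exp (- (lam * z)))). { intros; reflexivity. }
  apply (@ex_derive_continuous R_AbsRing R_NormedModule). auto_derive. auto.
  apply (cont_Pf lam M hM (x + 1) (good_any lam M hl hM _)); lra.
  apply (cont_Nf lam M hM (x + 1) (good_any lam M hl hM _)); lra.
Qed.

Lemma mono (V : R -> R) a b : a <= b ->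
  (forall c, a <= c <= b -> continuity_pt V c) ->
  (forall c, a < c < b -> exists d, is_derive V c d /\ 0 <= d) -> V a <= V b.
Proof.
  intros hab hc hd.
  destruct (MVT_gen V a b (fun c => Rmax 0 (Derive V c))) as [c [hc1 hc2]].
  - intros c h. rewrite Rmin_left in h by lra. rewrite Rmax_right in h by lra.
    destruct (hd c h) as [d [h1 h2]].
    rewrite (is_derive_unique V c d h1). rewrite Rmax_right by lra. exact h1.
  - intros c h. rewrite Rmin_left in h by lra. rewrite Rmax_right in h by lra. apply hc; lra.
  - pose proof (Rmax_l 0 (Derive V c)). nra.
Qed.

Lemma bound (lam : R) (M : R -> R) (hl : 0 < lam) (hM : is_M_lambda lam M)
  (x0 : R) (hx0 : 3 <= x0) (sg m : R) :
  (forall s d, x0 - 1 <= s <= x0 -> is_derive M s d -> 0 <= sg * (d - m)) ->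
  forall t d, x0 <= t <= x0 + 1 -> is_derive M t d -> 0 <= sg * (d - m).
Proof.
  intros H t d ht hd.
  set (a := x0 - 1).
  set (x := t - 1).
  assert (dt : d = lam * Kf lam M x / phi lam x).
  { pose proof (der_M lam M hl hM x ltac:(unfold x; lra)) as D.
    replace (x + 1) with t in D by (unfold x; ring).
    rewrite <- (is_derive_unique M t d hd). apply is_derive_unique. exact D. }
  set (V := fun z => sg * (Kf lam M z - m * phi lam z / lam)).
  assert (Va : 0 <= V a).
  { pose proof (der_M lam M hl hM a ltac:(unfold a; lra)) as D.
    replace (a + 1) with x0 in D by (unfold a; ring).
    pose proof (H x0 _ ltac:(lra) D) as h.
    pose proof (phi_pos lam a hl ltac:(unfold a; lra)) as hp.
    unfold V.
    replace (sg * (Kf lam M a - m * phi lam a / lam))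
      with (phi lam a / lam * (sg * (lam * Kf lam M a / phi lam a - m))) by (field; lra).
    apply Rmult_le_pos; [|exact h].
    unfold Rdiv. apply Rmult_le_pos; [lra|]. left; apply Rinv_0_lt_compat; lra. }
  assert (Vx : V a <= V x).
  { apply mono. unfold a, x; lra.
    - intros c hc. apply continuity_pt_filterlim. change (continuous V c). unfold V.
      apply (continuous_ext (fun z => mult sg (minus (Kf lam M z) (mult (mult m (phi lam z)) (/ lam))))).
      { intros z. reflexivity. }
      apply (@continuous_mult R_UniformSpace R_AbsRing). apply continuous_const.
      apply (@continuous_minus R_UniformSpace R_AbsRing R_NormedModule).
      apply (cont_K lam M hl hM). unfold a in hc; lra.
      apply (@continuous_mult R_UniformSpace R_AbsRing). 
      apply (@continuous_mult R_UniformSpace R_AbsRing). apply continuous_const.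
      apply (@ex_derive_continuous R_AbsRing R_NormedModule). exists (lam * (exp (lam * c) - exp (- (lam * c)))). apply der_phi.
      apply continuous_const.
    - intros c hc.
      assert (hc1 : 1 < c - 1) by (unfold a in hc; lra).
      pose proof (der_M lam M hl hM (c - 1) hc1) as D.
      replace (c - 1 + 1) with c in D by ring.
      set (dc := lam * Kf lam M (c - 1) / phi lam (c - 1)) in D.
      pose proof (H c dc ltac:(unfold a, x in hc; lra) D) as h.
      pose proof (der_K lam M hl hM c dc ltac:(lra) D) as DK.
      pose proof (der_phi lam c) as DPh.
      exists (sg * (dc - m) * (exp (lam * c) - exp (- (lam * c)))).
      split.
      + unfold V. auto_derive.
        * repeat split; [exists (dc * (exp (lam * c) - exp (- (lam * c)))); exact DK
            | exists (lam * (exp (lam * c) - exp (- (lam * c)))); exact DPh].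
        * replace (Derive (fun x1 => Kf lam M x1) c) with (dc * (exp (lam * c) - exp (- (lam * c))))
            by (symmetry; apply is_derive_unique; exact DK).
          replace (Derive (fun x1 => phi lam x1) c) with (lam * (exp (lam * c) - exp (- (lam * c))))
            by (symmetry; apply is_derive_unique; exact DPh).
          field. lra.
      + apply Rmult_le_pos; [exact h|].
        assert (exp (- (lam * c)) < exp (lam * c)).
        { apply exp_increasing. assert (0 < lam * c) by (apply Rmult_lt_0_compat; lra). lra. }
        lra. }
  assert (hp : 0 < phi lam x) by (apply phi_pos; [exact hl | unfold x; lra]).
  replace (sg * (d - m)) with (lam / phi lam x * V x).
  2: { unfold V. rewrite dt. field. split; lra. }
  apply Rmult_le_pos; [|lra].
  unfold Rdiv. apply Rmult_le_pos; [lra|]. left; apply Rinv_0_lt_compat; lra.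
Qed.

Theorem mainTheorem9 (lam : R) (M : R -> R) (hlam : 0 < lam)
  (hM : is_M_lambda lam M) (x : R) (hx : 3 <= x) :
  Rbar_le (Glb_Rbar (deriv_values M (x - 1) x)) (Glb_Rbar (deriv_values M x (x + 1))) /\
  Rbar_le (Glb_Rbar (deriv_values M x (x + 1))) (Lub_Rbar (deriv_values M x (x + 1))) /\
  Rbar_le (Lub_Rbar (deriv_values M x (x + 1))) (Lub_Rbar (deriv_values M (x - 1) x)).
Proof.
  set (D1 := deriv_values M (x - 1) x).
  set (D2 := deriv_values M x (x + 1)).
  pose proof (der_M lam M hlam hM (x - 1) ltac:(lra)) as Dx.
  replace (x - 1 + 1) with x in Dx by ring.
  set (d0 := lam * Kf lam M (x - 1) / phi lam (x - 1)) in Dx.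
  assert (H1 : D1 d0) by (exists x; split; [lra | exact Dx]).
  assert (H2 : D2 d0) by (exists x; split; [lra | exact Dx]).
  assert (lower : forall m : R, (forall d, D1 d -> m <= d) -> forall d, D2 d -> m <= d).
  { intros m hm d [t [ht hd]].
    assert (h := bound lam M hlam hM x hx 1 m).
    assert (0 <= 1 * (d - m)); [|lra].
    apply (h) with t; auto.
    intros s d' hs hd'. assert (m <= d') by (apply hm; exists s; split; auto). lra. }
  assert (upper : forall m : R, (forall d, D1 d -> d <= m) -> forall d, D2 d -> d <= m).
  { intros m hm d [t [ht hd]].
    assert (h := bound lam M hlam hM x hx (-1) m).
    assert (0 <= -1 * (d - m)); [|lra].
    apply (h) with t; auto.
    intros s d' hs hd'. assert (d' <= m) by (apply hm; exists s; split; auto). lra. }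
  split; [|split].
  - destruct (Glb_Rbar_correct D2) as [_ G2]. apply G2. intros d hd.
    destruct (Glb_Rbar_correct D1) as [L1 _].
    destruct (Glb_Rbar D1) as [r| |] eqn:E; simpl.
    + apply (lower r); [intros d' hd'; exact (L1 d' hd') | exact hd].
    + exact (L1 d0 H1).
    + exact I.
  - destruct (Glb_Rbar_correct D2) as [L2 _].
    destruct (Lub_Rbar_correct D2) as [U2 _].
    apply Rbar_le_trans with (Finite d0). apply L2; exact H2. apply U2; exact H2.
  - destruct (Lub_Rbar_correct D2) as [_ G2]. apply G2. intros d hd.
    destruct (Lub_Rbar_correct D1) as [L1 _].
    destruct (Lub_Rbar D1) as [r| |] eqn:E; simpl.
    + apply (upper r); [intros d' hd'; exact (L1 d' hd') | exact hd].
    + exact I.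
    + exact (L1 d0 H1).
Qed.
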